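(* Let $\lambda_1,\lambda_2>0$ and $\nu\in(0,1)$. Define, for $\theta\in\mathbb{R}$, $$\Psi^{(1)}_{\nu,\underline{\lambda}}(\theta):=\begin{cases}(\lambda_1(e^\theta-1))^{1/\nu} & \text{if } \theta\geq0,\\ (\lambda_2(e^{-\theta}-1))^{1/\nu} & \text{if } \theta<0,\end{cases}$$ $$\Psi^{(2)}_{\nu,\underline{\lambda}}(\theta):=\begin{cases}(\lambda_1(e^\theta-1)+\lambda_2(e^{-\theta}-1))^{1/\nu} & \text{if } \lambda_1(e^\theta-1)+\lambda_2(e^{-\theta}-1)\geq0,\\ 0 & \text{otherwise},\end{cases}$$ and for $k\in\{1,2\}$ let $I^{(k)}_{\mathrm{LD}}(x):=\sup_{\theta\in\mathbb{R}}\{\theta x-\Psi^{(k)}_{\nu,\underline{\lambda}}(\theta)\}$. Then $I^{(1)}_{\mathrm{LD}}(0)=I^{(2)}_{\mathrm{LD}}(0)=0$ and, for every $x\neq0$, $I^{(2)}_{\mathrm{LD}}(x)>I^{(1)}_{\mathrm{LD}}(x)>0$.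
   Context: In the paper, $I^{(1)}_{\mathrm{LD}}$ is the large deviation rate function (speed $t$) of $Y(t)/t$, where $Y(t)=N_{\nu,\lambda_1}(t)-N_{\nu,\lambda_2}(t)$ is a difference of two independent fractional Poisson processes with the same $\nu$, and $I^{(2)}_{\mathrm{LD}}$ is the rate function of $Z(t)/t$, where $Z(t)=S(L_\nu(t))$ with $S$ a difference of two independent Poisson processes with intensities $\lambda_1,\lambda_2$ and $L_\nu$ an independent inverse $\nu$-stable subordinator. The claim concerns only the functions defined explicitly above. *)

(* Defs.v *)
From mathcomp Require Import all_boot all_order all_algebra.
From mathcomp Require Import all_classical all_reals all_analysis.
Set Implicit Arguments. Unset Strict Implicit. Unset Printing Implicit Defensive.
Import Order.TTheory GRing.Theory Num.Theory.
Local Open Scope ring_scope.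
Local Open Scope classical_set_scope.

Definition Psi1 (R : realType) (nu l1 l2 theta : R) : R :=
  if 0 <= theta then powR (l1 * (expR theta - 1)) (1 / nu)
  else powR (l2 * (expR (- theta) - 1)) (1 / nu).

Definition Psi2 (R : realType) (nu l1 l2 theta : R) : R :=
  let a := l1 * (expR theta - 1) + l2 * (expR (- theta) - 1) in
  if 0 <= a then powR a (1 / nu) else 0.

Definition legendre (R : realType) (Psi : R -> R) (x : R) : \bar R :=
  ereal_sup [set ((theta * x - Psi theta)%R)%:E | theta in [set: R]].

Definition ILD1 (R : realType) (nu l1 l2 : R) : R -> \bar R :=
  legendre (Psi1 nu l1 l2).
Definition ILD2 (R : realType) (nu l1 l2 : R) : R -> \bar R :=
  legendre (Psi2 nu l1 l2).

(* Main.v *)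
Require Import Defs.
From mathcomp Require Import all_boot all_order all_algebra.
From mathcomp Require Import all_classical all_reals all_analysis.
From mathcomp Require Import ring lra.
Import Order.TTheory GRing.Theory Num.Theory.
Set Implicit Arguments. Unset Strict Implicit.
Local Open Scope ring_scope.

Lemma powR_sub1 (R : realType) (y p : R) : 0 <= y -> 1 <= p -> y - 1 <= powR y p.
Proof.
move=> y0 p1; have [y1|y1] := leP 1 y.
  by apply: le_trans (le1r_powR y1 p1); lra.
by apply: le_trans (powR_ge0 _ _); lra.
Qed.

Lemma powR_le1 (R : realType) (t p : R) : 0 <= t <= 1 -> 1 <= p -> powR t p <= t.
Proof.
move=> /andP[t0 t1] p1; have [->|tn0] := eqVneq t 0.
  by rewrite powR0 //; apply/eqP => p0; move: p1; rewrite p0 ler10.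
by apply: ge1r_powR => //; rewrite t1 andbT lt_neqAle eq_sym tn0.
Qed.

Lemma powR_supadd (R : realType) (a b p : R) : 0 <= a -> 0 <= b -> 1 <= p ->
  powR a p + powR b p <= powR (a + b) p.
Proof.
move=> a0 b0 p1; have [ab0|abn0] := eqVneq (a + b) 0.
  have -> : a = 0 by lra.
  have -> : b = 0 by lra.
  have pn0 : p != 0 by apply/eqP => p0; move: p1; rewrite p0 ler10.
  by rewrite add0r !powR0.
have s0 : 0 < a + b by rewrite lt_neqAle eq_sym abn0 addr_ge0.
have ea : a = (a / (a + b)) * (a + b) by rewrite divfK.
have eb : b = (b / (a + b)) * (a + b) by rewrite divfK.
have Ea : powR a p = powR (a / (a + b)) p * powR (a + b) p.
  by rewrite -powRM -?ea // ?divr_ge0 // ltW.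
have Eb : powR b p = powR (b / (a + b)) p * powR (a + b) p.
  by rewrite -powRM -?eb // ?divr_ge0 // ltW.
rewrite Ea Eb.
have h1 : powR (a / (a + b)) p <= a / (a + b).
  apply: powR_le1 => //; apply/andP; split; first by rewrite divr_ge0 // ltW.
  by rewrite ler_pdivrMr // mul1r; lra.
have h2 : powR (b / (a + b)) p <= b / (a + b).
  apply: powR_le1 => //; apply/andP; split; first by rewrite divr_ge0 // ltW.
  by rewrite ler_pdivrMr // mul1r; lra.
have hs : a / (a + b) + b / (a + b) = 1 by rewrite -mulrDl divff.
have hq := powR_ge0 (a + b) p.
have k1 := ler_wpM2r hq h1.
have k2 := ler_wpM2r hq h2.
have : (a / (a + b)) * powR (a + b) p + (b / (a + b)) * powR (a + b) p = powR (a + b) p.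
  by rewrite -mulrDl hs mul1r.
lra.
Qed.

Lemma gap (R : realType) (a1 a2 eta p : R) : 0 < eta -> eta <= a1 - a2 -> eta <= a1 -> 1 <= p ->
  (if 0 <= a2 then powR a2 p else 0) + powR eta p <= powR a1 p.
Proof.
move=> e0 ea a10 p1; case: ifPn => a20.
  apply: le_trans (powR_supadd a20 (ltW e0) p1) _.
  apply: ge0_ler_powR; rewrite ?nnegrE; try lra.
have {a20} a20 : a2 < 0 by rewrite ltNge.

rewrite add0r; apply: ge0_ler_powR; rewrite ?nnegrE; try lra; exact: ea1.
Qed.

Lemma exp_sq (R : realType) (u : R) : 0 <= u -> 1 + u + u ^+ 2 / 4 <= expR u.
Proof.
move=> u0; have -> : expR u = expR (u / 2) * expR (u / 2).
  by rewrite -expRD; congr expR; field.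
have h := expR_ge1Dx (u / 2).
have h' : 0 <= 1 + u / 2 by lra.
have := ler_pM h' h' h h; lra.
Qed.

Lemma exp_small (R : realType) (u : R) : 0 <= u -> u <= 1/2 -> expR u - 1 <= 2 * u.
Proof.
move=> u0 u1.
have h1 : expR u * expR (- u) = 1 by rewrite -expRD subrr expR0.
have h2 := expR_ge1Dx (- u).
have h3 := expR_gt0 u.
have h4 : expR u * (1 - u) <= 1.
  by rewrite -h1; apply: ler_wpM2l; [exact: ltW | lra].
have h5 : expR u <= 2 by nra.
nra.
Qed.

Lemma small_pos (R : realType) (l y p : R) : 0 < l -> 0 < y -> 1 < p ->
  exists u, 0 < u /\ powR (l * (expR u - 1)) p < u * y.
Proof.
move=> l0 y0 p1.
set c := 2 * l; set q := p - 1.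
have c0 : 0 < c by rewrite /c; lra.
have q0 : 0 < q by rewrite /q; lra.
set w := powR (y / c) (1 / q).
have w0 : 0 < w by apply: powR_gt0; rewrite divr_gt0.
set u := Num.min (1/2) (w / (2 * c)).
have u0 : 0 < u by rewrite lt_min; apply/andP; split; [lra| rewrite divr_gt0 //; lra].
have u1 : u <= 1/2 by rewrite ge_min lexx.
have u2 : u <= w / (2 * c) by rewrite ge_min lexx orbT.
exists u; split => //.
have e1 := exp_small (ltW u0) u1.
have e0 : 0 <= expR u - 1.
  have := expR_ge1Dx u; lra.
have cu0 : 0 < c * u by rewrite mulr_gt0.
have cuw : c * u < w.
  have : c * u <= w / 2.
    have -> : w / 2 = c * (w / (2 * c)) by field; apply/eqP => /=; lra.
    by rewrite ler_pM2l.
  lra.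
have A : powR (l * (expR u - 1)) p <= powR (c * u) p.
  apply: ge0_ler_powR; rewrite ?nnegrE; try (by apply: mulr_ge0; lra); try lra.
  rewrite /c; nra.
have B : powR (c * u) p = c * u * powR (c * u) q.
  have -> : p = 1 + q by rewrite /q; ring.
  rewrite powRD; last by apply/implyP => _; rewrite gt_eqF.
  by rewrite powRr1 // ltW.
have C : powR (c * u) q < y / c.
  have -> : y / c = powR w q.
    rewrite /w -powRrM mul1r mulVf ?gt_eqF // powRr1 // divr_ge0 // ltW //.
  apply: gt0_ltr_powR => //; rewrite nnegrE ltW //.
have D : c * u * powR (c * u) q < c * u * (y / c) by rewrite ltr_pM2l.
have E : c * u * (y / c) = u * y by field; apply/eqP; lra.
apply: le_lt_trans A _; rewrite B; lra.
Qed.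


Lemma Psi1_ge0 (R : realType) (nu l1 l2 t : R) : 0 <= Psi1 nu l1 l2 t.
Proof. by rewrite /Psi1; case: ifP => _; exact: powR_ge0. Qed.

Lemma Psi2_ge0 (R : realType) (nu l1 l2 t : R) : 0 <= Psi2 nu l1 l2 t.
Proof. by rewrite /Psi2; case: ifP => _ //; exact: powR_ge0. Qed.

Lemma Psi1_0 (R : realType) (nu l1 l2 : R) : 0 < nu -> Psi1 nu l1 l2 0 = 0.
Proof.
move=> nu0; rewrite /Psi1 lexx expR0 subrr mulr0 powR0 //.
by rewrite div1r invr_eq0 gt_eqF.
Qed.

Lemma Psi2_0 (R : realType) (nu l1 l2 : R) : 0 < nu -> Psi2 nu l1 l2 0 = 0.
Proof.
move=> nu0; rewrite /Psi2 /= oppr0 expR0 subrr !mulr0 addr0 lexx powR0 //.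
by rewrite div1r invr_eq0 gt_eqF.
Qed.

Lemma leg_ub (R : realType) (Psi : R -> R) (x K : R) :
  (forall t, t * x - Psi t <= K) -> (legendre Psi x <= K%:E)%E.
Proof. by move=> h; apply: ge_ereal_sup => _ [t _ <-]; rewrite lee_fin. Qed.

Lemma leg_lb (R : realType) (Psi : R -> R) (x t : R) :
  ((t * x - Psi t)%:E <= legendre Psi x)%E.
Proof. by apply: ereal_sup_ubound; exists t. Qed.

Lemma f2_ub (R : realType) (nu l1 l2 x : R) : 0 < l1 -> 0 < l2 -> 0 < nu -> nu < 1 ->
  exists K, forall t, t * x - Psi2 nu l1 l2 t <= K.
Proof.
move=> l10 l20 nu0 nu1.
have hp : 1 <= 1 / nu by rewrite ler_pdivlMr // mul1r ltW.
set B := `|x| + l1 + l2.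
exists (B ^+ 2 / l1 + B ^+ 2 / l2 + 1) => t.
set a := l1 * (expR t - 1) + l2 * (expR (- t) - 1).
have Pa : a - 1 <= Psi2 nu l1 l2 t.
  rewrite /Psi2 /= -/a; case: ifPn => a0; first exact: powR_sub1.
  by move: a0; rewrite -ltNge => a0; lra.
have s1 : 0 <= B ^+ 2 / l1 by rewrite divr_ge0 ?sqr_ge0 ?ltW.
have s2 : 0 <= B ^+ 2 / l2 by rewrite divr_ge0 ?sqr_ge0 ?ltW.
have nx := normr_ge0 x.
have [t0|t0] := leP 0 t.
  have e1 := exp_sq t0.
  have e2 := expR_ge1Dx (- t).
  have k1 : l1 * (t + t ^+ 2 / 4) <= l1 * (expR t - 1).
    by rewrite ler_pM2l //; lra.
  have k2 : l2 * (- t) <= l2 * (expR (- t) - 1).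
    by rewrite ler_pM2l //; lra.
  have tx : t * x <= t * `|x|.
    by apply: le_trans (ler_norm _) _; rewrite normrM ger0_norm.
  have q : t * B - l1 * t ^+ 2 / 4 <= B ^+ 2 / l1.
    have : B ^+ 2 / l1 - (t * B - l1 * t ^+ 2 / 4) = (l1 * t / 2 - B) ^+ 2 / l1.
      by field; rewrite gt_eqF.
    have : 0 <= (l1 * t / 2 - B) ^+ 2 / l1 by rewrite divr_ge0 ?sqr_ge0 ?ltW.
    lra.
  have ht : 0 <= l1 * t by apply: mulr_ge0; lra.
  rewrite /B in q s1 s2 *; rewrite /a in Pa; lra.
have u0 : 0 <= - t by lra.
have e1 := exp_sq u0.
have e2 := expR_ge1Dx t.
have k1 : l2 * (- t + (- t) ^+ 2 / 4) <= l2 * (expR (- t) - 1).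
  by rewrite ler_pM2l //; lra.
have k2 : l1 * t <= l1 * (expR t - 1).
  by rewrite ler_pM2l //; lra.
have tx : t * x <= (- t) * `|x|.
  by apply: le_trans (ler_norm _) _; rewrite normrM ltr0_norm.
have q : (- t) * B - l2 * (- t) ^+ 2 / 4 <= B ^+ 2 / l2.
  have : B ^+ 2 / l2 - ((- t) * B - l2 * (- t) ^+ 2 / 4) = (l2 * (- t) / 2 - B) ^+ 2 / l2.
    by field; rewrite gt_eqF.
  have : 0 <= (l2 * (- t) / 2 - B) ^+ 2 / l2 by rewrite divr_ge0 ?sqr_ge0 ?ltW.
  lra.
have ht : 0 <= l2 * (- t) by apply: mulr_ge0; lra.
rewrite /B in q s1 s2 *; rewrite /a in Pa; lra.
Qed.

Lemma gap_Psi (R : realType) (nu l1 l2 m t : R) : 0 < l1 -> 0 < l2 -> 0 < nu -> nu < 1 ->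
  0 < m -> m <= `|t| ->
  Psi2 nu l1 l2 t + powR (Num.min l1 l2 * (1 - expR (- m))) (1 / nu) <= Psi1 nu l1 l2 t.
Proof.
move=> l10 l20 nu0 nu1 m0 mt.
have hp : 1 <= 1 / nu by rewrite ler_pdivlMr // mul1r ltW.
set k := Num.min l1 l2; set d := 1 - expR (- m).
have k0 : 0 < k by rewrite lt_min l10 l20.
have kl1 : k <= l1 by rewrite ge_min lexx.
have kl2 : k <= l2 by rewrite ge_min lexx orbT.
have d0 : 0 < d by rewrite /d subr_gt0 expR_lt1 oppr_lt0.
have eta0 : 0 < k * d by rewrite mulr_gt0.
rewrite /Psi2 /Psi1 /=.
have [t0|t0] := leP 0 t.
  have mt' : m <= t by rewrite ger0_norm in mt.
  have em : expR (- t) <= expR (- m) by rewrite ler_expR lerN2.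
  have e2 := expR_ge1Dx (- t).
  have e3 := expR_ge1Dx t.
  have dd : d <= 1 - expR (- t) by rewrite /d; lra.
  have dd0 : 0 <= 1 - expR (- t) by lra.
  have kd2 : k * d <= l2 * (1 - expR (- t)) by apply: ler_pM; lra.
  have kd1 : k * d <= l1 * (1 - expR (- t)) by apply: ler_pM; lra.
  have kk : l1 * (1 - expR (- t)) <= l1 * (expR t - 1) by rewrite ler_pM2l //; lra.
  apply: gap => //; lra.
have mt' : m <= - t by rewrite ltr0_norm in mt.
have em : expR t <= expR (- m) by rewrite ler_expR; lra.
have e2 := expR_ge1Dx (- t).
have e3 := expR_ge1Dx t.
have dd : d <= 1 - expR t by rewrite /d; lra.
have dd0 : 0 <= 1 - expR t by lra.
have kd2 : k * d <= l2 * (1 - expR t) by apply: ler_pM; lra.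
have kd1 : k * d <= l1 * (1 - expR t) by apply: ler_pM; lra.
have kk : l2 * (1 - expR t) <= l2 * (expR (- t) - 1) by rewrite ler_pM2l //; lra.
apply: gap => //; lra.
Qed.

Lemma pos_exists (R : realType) (nu l1 l2 x : R) : 0 < l1 -> 0 < l2 -> 0 < nu -> nu < 1 ->
  x != 0 -> exists t, 0 < t * x - Psi1 nu l1 l2 t.
Proof.
move=> l10 l20 nu0 nu1 xn0.
have hp : 1 < 1 / nu by rewrite ltr_pdivlMr // mul1r.
case: (ltgtP x 0) xn0 => // hx _.
  have hx' : 0 < - x by rewrite oppr_gt0.
  have [u [u0 hu]] := small_pos l20 hx' hp.
  exists (- u); rewrite /Psi1 oppr_ge0 leNgt u0 /= opprK.
  have -> : - u * x = u * - x by rewrite mulNr mulrN.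
  lra.
have [u [u0 hu]] := small_pos l10 hx hp.
exists u; rewrite /Psi1 (ltW u0); lra.
Qed.

Theorem proposition5p2 (R : realType) (l1 l2 nu : R)
  (hl1 : 0 < l1) (hl2 : 0 < l2) (hnu0 : 0 < nu) (hnu1 : nu < 1) :
  ILD1 nu l1 l2 0 = 0%E /\ ILD2 nu l1 l2 0 = 0%E /\
  (forall x : R, x != 0 ->
     (ILD1 nu l1 l2 x < ILD2 nu l1 l2 x)%E /\ (0 < ILD1 nu l1 l2 x)%E).
Proof.
split.
  apply/eqP; rewrite eq_le; apply/andP; split.
    apply: leg_ub => t; rewrite mulr0 sub0r oppr_le0; exact: Psi1_ge0.
  by have := leg_lb (Psi1 nu l1 l2) 0 0; rewrite mulr0 Psi1_0 // subr0.
split.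
  apply/eqP; rewrite eq_le; apply/andP; split.
    apply: leg_ub => t; rewrite mulr0 sub0r oppr_le0; exact: Psi2_ge0.
  by have := leg_lb (Psi2 nu l1 l2) 0 0; rewrite mulr0 Psi2_0 // subr0.
move=> x xn0.
have [t0 ht0] := pos_exists hl1 hl2 hnu0 hnu1 xn0.
set c := t0 * x - Psi1 nu l1 l2 t0 in ht0.
have nx : 0 < `|x| by rewrite normr_gt0.
set m := c / (2 * `|x|).
have m0 : 0 < m by rewrite divr_gt0 // mulr_gt0.
have tx : forall t, t * x <= `|t| * `|x|.
  by move=> t; rewrite -normrM ler_norm.
have mx : m * `|x| = c / 2 by rewrite /m; field; rewrite gt_eqF.
have mt0 : m <= `|t0|.
  rewrite /m ler_pdivrMr ?mulr_gt0 //.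
  have := tx t0; have := Psi1_ge0 nu l1 l2 t0; have := normr_ge0 t0.
  have := mulr_ge0 (normr_ge0 t0) (normr_ge0 x).
  rewrite /c; lra.
set E := powR (Num.min l1 l2 * (1 - expR (- m))) (1 / nu).
have E0 : 0 < E.
  apply: powR_gt0; apply: mulr_gt0; first by rewrite lt_min hl1 hl2.
  by rewrite subr_gt0 expR_lt1 oppr_lt0.
have g0 := gap_Psi hl1 hl2 hnu0 hnu1 m0 mt0; rewrite -/E in g0.
have [K hK] := f2_ub x hl1 hl2 hnu0 hnu1.
have hub : (ILD2 nu l1 l2 x <= K%:E)%E by apply: leg_ub.
have hlb := leg_lb (Psi2 nu l1 l2) x t0.
rewrite /ILD2 in hub *.
case E2 : (legendre (Psi2 nu l1 l2) x) hub hlb => [r| |] //= _ hlb.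
rewrite lee_fin in hlb.
have hlbt : forall t, t * x - Psi2 nu l1 l2 t <= r.
  by move=> t; have := leg_lb (Psi2 nu l1 l2) x t; rewrite E2 lee_fin.
have h1 : (ILD1 nu l1 l2 x <= (r - E)%:E)%E.
  apply: leg_ub => t.
  have [tm|tm] := ltP `|t| m.
    have := tx t; have := Psi1_ge0 nu l1 l2 t; have := normr_ge0 t.
    have : `|t| * `|x| <= m * `|x| by rewrite ler_pM2r // ltW.
    rewrite /c in ht0 mx; lra.
  have := gap_Psi hl1 hl2 hnu0 hnu1 m0 tm; rewrite -/E.
  have := hlbt t; lra.
split.
  apply: le_lt_trans h1 _; rewrite lte_fin; lra.
apply: lt_le_trans (leg_lb (Psi1 nu l1 l2) x t0); rewrite lte_fin; exact: ht0.
Qed.
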